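(* Let $M\colon[0,\infty)\times[0,\infty)\to[0,\infty)$ be symmetric and moderately increasing, suppose $\rho_M(x,y)=\dfrac{|x-y|}{M(|x|,|y|)}$ is a metric on $\mathbb{R}^n$, and suppose that for each $x$ the function $M(x,\cdot)$ is of class $C^2$ on $(0,\infty)$. Then $\rho_M$ is locally convex.
   Context: Convention $0/0=0$. A function $f\colon[0,\infty)\to[0,\infty)$ is moderately increasing if it is increasing and $f(t)/t$ is decreasing; $M$ is moderately increasing if $M(x,\cdot)$ and $M(\cdot,x)$ are moderately increasing for each fixed $x$. A metric $d$ is locally convex if for every $x$ there is $r_0>0$ such that the ball $\{y: d(x,y)<r\}$ is (Euclidean) convex for every $0<r<r_0$. *)

(* Defs.v *)
From HB Require Import structures.
From mathcomp Require Import all_boot all_order all_algebra.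
From mathcomp Require Import all_classical all_reals all_analysis.
Set Implicit Arguments. Unset Strict Implicit. Unset Printing Implicit Defensive.
Import Order.TTheory GRing.Theory Num.Theory.
Import numFieldNormedType.Exports.
Local Open Scope ring_scope.
Local Open Scope classical_set_scope.

Section Defs.
Variable R : realType.

Definition enorm (n : nat) (v : 'rV[R]_n) : R :=
  Num.sqrt (\sum_(i < n) (v ord0 i) ^+ 2).

Definition moderately_increasing (f : R -> R) : Prop :=
  (forall s t, 0 <= s -> s <= t -> f s <= f t) /\
  (forall s t, 0 < s -> s <= t -> f t / t <= f s / s).

Definition moderately_increasing2 (M : R -> R -> R) : Prop :=
  forall x, 0 <= x -> moderately_increasing (M x) /\
                      moderately_increasing (fun y => M y x).

(* rho_M(x,y) = |x-y| / M(|x|,|y|), with mathcomp's convention a/0 = 0. *)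
Definition rhoM (M : R -> R -> R) (n : nat) (x y : 'rV[R]_n) : R :=
  enorm (x - y) / M (enorm x) (enorm y).

Definition is_metric (T : Type) (d : T -> T -> R) : Prop :=
  (forall x y, 0 <= d x y) /\
  (forall x y, d x y = 0 <-> x = y) /\
  (forall x y, d x y = d y x) /\
  (forall x y z, d x z <= d x y + d y z).

Definition convex_set (n : nat) (S : set 'rV[R]_n) : Prop :=
  forall a b, S a -> S b -> forall t : R, 0 <= t -> t <= 1 ->
    S ((1 - t) *: a + t *: b).

Definition locally_convex_metric (n : nat) (d : 'rV[R]_n -> 'rV[R]_n -> R) : Prop :=
  forall x, exists2 r0 : R, 0 < r0 &
    forall r, 0 < r -> r < r0 -> convex_set [set y | d x y < r].

Definition C2_on_pos (f : R -> R) : Prop :=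
  (forall t, 0 < t -> derivable f t 1) /\
  (forall t, 0 < t -> derivable f^`() t 1) /\
  (forall t, 0 < t -> {for t, continuous f^`()^`()}).

End Defs.

(* Main.v *)
Require Import Defs.
From HB Require Import structures.
From mathcomp Require Import all_boot all_order all_algebra.
From mathcomp Require Import all_classical all_reals all_analysis.
From mathcomp Require Import ring lra.
Set Implicit Arguments. Unset Strict Implicit.
Import Order.TTheory GRing.Theory Num.Theory.
Import numFieldNormedType.Exports.
Local Open Scope ring_scope.
Local Open Scope classical_set_scope.

Section OneD.
Variable R : realType.
Implicit Types f : R -> R.

Lemma mvt_lt f x y : x < y -> (forall s, x <= s <= y -> derivable f s 1) ->
  exists c, x <= c <= y /\ f y - f x = (f^`()%classic) c * (y - x).
Proof.
move=> xy df.
have [c cin ->] : exists2 c, c \in `]x, y[%R & f y - f x = (f^`()%classic) c * (y - x).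
  apply: MVT => //.
    move=> s; rewrite in_itv /= => /andP[h1 h2].
    rewrite derive1E; apply: derivableP; apply: df; rewrite !ltW //.
  apply: derivable_within_continuous => s; rewrite in_itv /= => h.
  exact: df.
exists c; split => //; move: cin; rewrite in_itv /= => /andP[h1 h2].
by rewrite !ltW.
Qed.

Lemma mvt_btw f lo hi x y : (forall s, lo < s < hi -> derivable f s 1) ->
  lo < x < hi -> lo < y < hi ->
  exists c, ((x <= c <= y) \/ (y <= c <= x)) /\ f y - f x = (f^`()%classic) c * (y - x).
Proof.
move=> df /andP[x1 x2] /andP[y1 y2].
case: (ltgtP x y) => [xy|yx|<-].
- have [c [h1 h2]] := mvt_lt xy (fun s h => df s ltac:(apply/andP; case/andP: h => ? ?; split; lra)).
  by exists c; split; [left|].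
- have [c [h1 h2]] := mvt_lt yx (fun s h => df s ltac:(apply/andP; case/andP: h => ? ?; split; lra)).
  exists c; split; [right => //|].
  by rewrite -opprB h2 -mulrN opprB.
- by exists x; split; [left; rewrite !lexx | rewrite !subrr mulr0].
Qed.

Lemma lipf f lo hi K : (forall s, lo < s < hi -> derivable f s 1) ->
  (forall s, lo < s < hi -> `|(f^`()%classic) s| <= K) ->
  forall x y, lo < x < hi -> lo < y < hi -> `|f y - f x| <= K * `|y - x|.
Proof.
move=> df dK x y hx hy.
have [c [hc ->]] := mvt_btw df hx hy.
have cin : lo < c < hi.
  by case/andP: hx => ? ?; case/andP: hy => ? ?; case: hc => /andP[? ?]; apply/andP; split; lra.
rewrite normrM; apply: ler_wpM2r => //; exact: dK.
Qed.

Lemma semiconc f lo hi K A B t : 0 <= K -> (forall s, lo < s < hi -> derivable f s 1) ->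
  (forall x y, lo < x < hi -> lo < y < hi ->
     `|(f^`()%classic) y - (f^`()%classic) x| <= K * `|y - x|) ->
  lo < A < hi -> lo < B < hi -> 0 <= t <= 1 ->
  (1 - t) * f A + t * f B - K * (t * (1 - t)) * (B - A) ^+ 2
    <= f ((1 - t) * A + t * B).
Proof.
move=> hK df dL hA hB /andP[t0 t1].
set u := (1 - t) * A + t * B.
have ubtw : (A <= u <= B) \/ (B <= u <= A).
  case: (lerP A B) => h; [left|right]; apply/andP; split; rewrite /u; nra.
have hu : lo < u < hi.
  by case/andP: hA => ? ?; case/andP: hB => ? ?; case: ubtw => /andP[? ?]; apply/andP; split; lra.
have [c1 [hc1 e1]] := mvt_btw df hA hu.
have [c2 [hc2 e2]] := mvt_btw df hu hB.
have c1in : lo < c1 < hi.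
  by case/andP: hA => ? ?; case/andP: hu => ? ?; case: hc1 => /andP[? ?]; apply/andP; split; lra.
have c2in : lo < c2 < hi.
  by case/andP: hB => ? ?; case/andP: hu => ? ?; case: hc2 => /andP[? ?]; apply/andP; split; lra.
have hc12 : `|c2 - c1| <= `|B - A|.
  have n1 := ler_norm (B - A).
  have n2 : A - B <= `|B - A| by rewrite distrC; apply: ler_norm.
  rewrite ler_norml; apply/andP.
  case: ubtw hc1 hc2 => /andP[? ?] [/andP[? ?]|/andP[? ?]] [/andP[? ?]|/andP[? ?]];
   split; lra.
have hD := dL _ _ c1in c2in.
set D := (f^`()%classic) c2 - (f^`()%classic) c1 in hD.
have key : f u - ((1 - t) * f A + t * f B) = - (t * (1 - t)) * (B - A) * D.
  have -> : f u - ((1 - t) * f A + t * f B) = (1 - t) * (f u - f A) - t * (f B - f u) by ring.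
  rewrite e1 e2 /D /u; ring.
have hb : (B - A) * D <= K * (B - A) ^+ 2.
  have h1 := ler_norm ((B - A) * D); rewrite normrM in h1.
  have h2 : `|D| <= K * `|B - A| by apply: le_trans hD _; apply: ler_wpM2l.
  have e : `|B - A| ^+ 2 = (B - A) ^+ 2 by rewrite -normrX ger0_norm // sqr_ge0.
  rewrite -e.
  have := normr_ge0 (B - A); have := normr_ge0 D; nra.
have ht : 0 <= t * (1 - t) by nra.
have : - (t * (1 - t)) * (B - A) * D >= - (K * (t * (1 - t)) * (B - A) ^+ 2) by nra.
lra.
Qed.
End OneD.

Section Vec.
Variables (R : realType) (n : nat).
Implicit Types u w a b x : 'rV[R]_n.

Definition nsq u : R := \sum_(i < n) (u ord0 i) ^+ 2.
Definition dot u w : R := \sum_(i < n) u ord0 i * w ord0 i.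

Lemma nsq_ge0 u : 0 <= nsq u.
Proof. by apply: sumr_ge0 => i _; apply: sqr_ge0. Qed.

Lemma enormE u : enorm u = Num.sqrt (nsq u).
Proof. by []. Qed.

Lemma enorm_ge0 u : 0 <= enorm u.
Proof. exact: sqrtr_ge0. Qed.

Lemma enorm_sq u : enorm u ^+ 2 = nsq u.
Proof. by rewrite enormE sqr_sqrtr // nsq_ge0. Qed.

Lemma nsq_lin u w l : nsq (u + l *: w) = nsq u + 2 * l * dot u w + l ^+ 2 * nsq w.
Proof.
rewrite /nsq /dot !mulr_sumr -!big_split /=.
by apply: eq_bigr => i _; rewrite !mxE; ring.
Qed.

Lemma nsq_comb a b t : nsq ((1 - t) *: a + t *: b) =
  (1 - t) * nsq a + t * nsq b - t * (1 - t) * nsq (a - b).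
Proof.
rewrite /nsq !mulr_sumr -big_split /= -sumrB.
by apply: eq_bigr => i _; rewrite !mxE; ring.
Qed.

Lemma nsqN u : nsq (- u) = nsq u.
Proof. by rewrite /nsq; apply: eq_bigr => i _; rewrite !mxE sqrrN. Qed.

Lemma nsq0_dot u w : nsq u = 0 -> dot u w = 0.
Proof.
move=> /eqP; rewrite /nsq psumr_eq0 => [/allP h|i _]; last exact: sqr_ge0.
rewrite /dot big1 // => i _.
have := h i (mem_index_enum _); rewrite /= sqrf_eq0 => /eqP ->; by rewrite mul0r.
Qed.

Lemma dotC u w : dot u w = dot w u.
Proof. by apply: eq_bigr => i _; rewrite mulrC. Qed.

Lemma cauchy u w : dot u w <= enorm u * enorm w.
Proof.
have [h0|hu] := eqVneq (nsq u) 0.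
  by rewrite nsq0_dot // mulr_ge0 // enorm_ge0.
have [h0|hw] := eqVneq (nsq w) 0.
  by rewrite dotC nsq0_dot // mulr_ge0 // enorm_ge0.
set A := enorm u; set B := enorm w.
have Ap : 0 < A by rewrite /A enormE sqrtr_gt0 lt_neqAle eq_sym hu nsq_ge0.
have Bp : 0 < B by rewrite /B enormE sqrtr_gt0 lt_neqAle eq_sym hw nsq_ge0.
have := nsq_ge0 (B *: u + (- A) *: w).
have -> : B *: u + (- A) *: w = B *: (u + (- A / B) *: w).
  by rewrite scalerDr scalerA mulrCA divff ?mulr1 // gt_eqF.
have -> : nsq (B *: (u + (- A / B) *: w)) = B ^+ 2 * nsq (u + (- A / B) *: w).
  by rewrite /nsq mulr_sumr; apply: eq_bigr => i _; rewrite mxE exprMn.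
rewrite nsq_lin -!enorm_sq -/A -/B.
have e : B ^+ 2 * (A ^+ 2 + 2 * (- A / B) * dot u w + (- A / B) ^+ 2 * B ^+ 2)
   = 2 * A * B * (A * B - dot u w).
  by field; rewrite gt_eqF.
rewrite e => h.
have : 0 <= A * B - dot u w.
  by rewrite -(pmulr_rge0 _ (_ : 0 < 2 * A * B)) // !mulr_gt0.
lra.
Qed.

Lemma enorm_triangle u w : enorm (u + w) <= enorm u + enorm w.
Proof.
have := nsq_lin u w 1; rewrite scale1r -!enorm_sq => e.
have := cauchy u w.
have := enorm_ge0 (u + w); have := enorm_ge0 u; have := enorm_ge0 w.
nra.
Qed.

Lemma enormN u : enorm (- u) = enorm u.
Proof. by rewrite !enormE nsqN. Qed.

Lemma enorm_rev a b : `|enorm a - enorm b| <= enorm (a - b).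
Proof.
have h1 := enorm_triangle (a - b) b; rewrite subrK in h1.
have h2 := enorm_triangle (b - a) a; rewrite subrK -opprB enormN in h2.
rewrite ler_norml; apply/andP; split; lra.
Qed.

Lemma nsq0 u : nsq u = 0 -> u = 0.
Proof.
move=> /eqP; rewrite /nsq psumr_eq0 => [/allP h|i _]; last exact: sqr_ge0.
apply/matrixP => i j; rewrite !mxE.
have -> : i = ord0 by apply/val_inj; case: i => [[]].
by have := h j (mem_index_enum _); rewrite /= sqrf_eq0 => /eqP.
Qed.

Lemma nsq_zero : nsq (0 : 'rV[R]_n) = 0.
Proof. by rewrite /nsq big1 // => i _; rewrite mxE expr0n. Qed.

Lemma enorm0 : enorm (0 : 'rV[R]_n) = 0.
Proof. by rewrite enormE nsq_zero sqrtr0. Qed.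

Lemma enorm_gt0 u : u != 0 -> 0 < enorm u.
Proof.
move=> h; rewrite enormE sqrtr_gt0 lt_neqAle nsq_ge0 andbT eq_sym.
by apply/eqP => /nsq0 e; move: h; rewrite e eqxx.
Qed.

Lemma enorm_lt_sq u (c : R) : 0 <= c -> nsq u < c ^+ 2 -> enorm u < c.
Proof.
move=> c0; rewrite -enorm_sq => h; have := enorm_ge0 u; nra.
Qed.

End Vec.

Lemma conv_in (R : realType) (lo hi A B t : R) : lo < A < hi -> lo < B < hi -> 0 <= t <= 1 ->
  lo < (1 - t) * A + t * B < hi.
Proof.
move=> /andP[? ?] /andP[? ?] /andP[t0 t1].
have e : (1 - t) * A + t * B = A + t * (B - A) by ring.
have e' : (1 - t) * A + t * B = B + (1 - t) * (A - B) by ring.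
rewrite e; case: (lerP A B) => h.
  have : 0 <= t * (B - A) by rewrite mulr_ge0 // subr_ge0.
  have : t * (B - A) <= B - A by rewrite ler_piMl // subr_ge0.
  move=> ? ?; apply/andP; split; lra.
rewrite -e e'.
have : 0 <= (1 - t) * (A - B) by apply: mulr_ge0; lra.
have : (1 - t) * (A - B) <= A - B.
  apply: ler_piMl; [rewrite subr_ge0 ltW // | lra].
move=> ? ?; apply/andP; split; lra.
Qed.

Lemma key1D (R : realType) (m : R -> R) (a0 d K1 K2 K3 : R) :
  0 < a0 -> 0 < d -> d <= a0 / 2 -> 0 <= K1 -> 0 <= K2 ->
  (forall s t, 0 <= s -> s <= t -> m s <= m t) ->
  (forall s, a0 - d < s < a0 + d -> 0 <= m s <= K3) ->
  (forall y z, a0 - d < y < a0 + d -> a0 - d < z < a0 + d ->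
     `|m z - m y| <= K1 * `|z - y|) ->
  (forall A B t, a0 - d < A < a0 + d -> a0 - d < B < a0 + d -> 0 <= t <= 1 ->
     (1 - t) * m A + t * m B - K2 * (t * (1 - t)) * (B - A) ^+ 2
       <= m ((1 - t) * A + t * B)) ->
  forall A B V t D2, a0 - d < A < a0 + d -> a0 - d < B < a0 + d ->
    a0 - d < V < a0 + d -> 0 <= t <= 1 -> (A - B) ^+ 2 <= D2 ->
    V ^+ 2 = (1 - t) * A ^+ 2 + t * B ^+ 2 - t * (1 - t) * D2 ->
    (1 - t) * m A ^+ 2 + t * m B ^+ 2
      - (K1 ^+ 2 + 2 * K3 * (K1 / a0 + K2)) * (t * (1 - t)) * D2 <= m V ^+ 2.
Proof.
move=> a0p dp da0 K1p K2p mono mb lipm sc A B V t D2 hA hB hV ht hD eV.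
set s := t * (1 - t).
have eV' : V ^+ 2 = (1 - t) * A ^+ 2 + t * B ^+ 2 - s * D2 by rewrite eV.
have s0 : 0 <= s by case/andP: ht => ? ?; rewrite /s; nra.
set U := (1 - t) * A + t * B.
have hU : a0 - d < U < a0 + d.
  exact: conv_in.
have D20 : 0 <= D2 by apply: le_trans hD; apply: sqr_ge0.
have hUV : a0 * (U - V) <= s * D2.
  have eU : U ^+ 2 = (1 - t) * A ^+ 2 + t * B ^+ 2 - s * (A - B) ^+ 2 by rewrite /U /s; ring.
  case: (lerP U V) => h.
    have : a0 * (U - V) <= 0 by rewrite pmulr_rle0 // subr_le0.
    have := mulr_ge0 s0 D20; lra.
  have h1 : U ^+ 2 - V ^+ 2 <= s * D2.
    rewrite eU eV'; have := mulr_ge0 s0 (sqr_ge0 (A - B)); lra.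
  have h2 : a0 * (U - V) <= (U + V) * (U - V).
    apply: ler_wpM2r; first by rewrite subr_ge0 ltW.
    by case/andP: hU => ? ?; case/andP: hV => ? ?; lra.
  apply: le_trans h2 _; apply: le_trans h1; rewrite le_eqVlt; apply/orP; left; apply/eqP; ring.
have hmV : a0 * m U - K1 * (s * D2) <= a0 * m V.
  case: (lerP U V) => h.
    have := mono U V; have : 0 <= U by case/andP: hU => ? ?; lra.
    move=> u0 /(_ u0 h) => hm.
    have := mulr_ge0 K1p (mulr_ge0 s0 D20).
    have := ler_wpM2l (ltW a0p) hm; lra.
  have hl := lipm _ _ hU hV.
  rewrite [`|V - U|]distrC (gtr0_norm (_ : 0 < U - V)) ?subr_gt0 // in hl.
  have : m U - m V <= K1 * (U - V).
    by apply: le_trans hl; rewrite distrC; apply: ler_norm.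
  move=> h3; have := ler_wpM2l (ltW a0p) h3.
  have := ler_wpM2l K1p hUV. nra.
have hsc := sc A B t hA hB ht.
rewrite -/U -/s in hsc.
set al := m A; set be := m B; set ga := m V.
set w := (1 - t) * al + t * be.
set C1 := K1 / a0 + K2.
set e := C1 * s * D2.
have hga : w - e <= ga.
  have h4 : K2 * s * (B - A) ^+ 2 <= K2 * s * D2.
    apply: ler_wpM2l; first by rewrite mulr_ge0.
    by rewrite -sqrrN opprB.
  have : a0 * (w - e) = a0 * w - a0 * K2 * s * D2 - K1 * (s * D2).
    by rewrite /e /C1; field; rewrite gt_eqF.
  move=> e4.
  suff : a0 * (w - e) <= a0 * ga.
    by rewrite ler_pM2l.
  rewrite e4.
  have hsc' : w - K2 * s * (B - A) ^+ 2 <= m U := hsc.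
  have : a0 * (w - K2 * s * (B - A) ^+ 2) <= a0 * m U.
    by apply: ler_wpM2l; [apply: ltW | ].
  have := ler_wpM2l (ltW a0p) h4.
  have hmV' : a0 * m U - K1 * (s * D2) <= a0 * ga := hmV.
  lra.
have /andP[al0 alK] : 0 <= al <= K3 := mb A hA.
have /andP[be0 beK] : 0 <= be <= K3 := mb B hB.
have /andP[ga0 gaK] : 0 <= ga <= K3 := mb V hV.
have K30 : 0 <= K3 by lra.
have hab : (al - be) ^+ 2 <= K1 ^+ 2 * D2.
  have hl := lipm _ _ hB hA.
  rewrite -/al -/be in hl.
  have : `|al - be| ^+ 2 <= (K1 * `|A - B|) ^+ 2.
    by rewrite lerXn2r // ?nnegrE // mulr_ge0.
  rewrite -normrX ger0_norm ?sqr_ge0 // exprMn -normrX ger0_norm ?sqr_ge0 //.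
  move=> h5; apply: le_trans h5 _; apply: ler_wpM2l => //; exact: sqr_ge0.
have ew : (1 - t) * al ^+ 2 + t * be ^+ 2 = w ^+ 2 + s * (al - be) ^+ 2.
  by rewrite /w /s; ring.
have w0 : 0 <= w by case/andP: ht => ? ?; rewrite /w; apply: addr_ge0; apply: mulr_ge0; lra.
have wK : w <= K3.
  case/andP: ht => ? ?; rewrite /w.
  have : (1 - t) * al <= (1 - t) * K3 by apply: ler_wpM2l => //; lra.
  have : t * be <= t * K3 by apply: ler_wpM2l.
  lra.
have e0 : 0 <= e.
  rewrite /e /C1; apply: mulr_ge0 => //; apply: mulr_ge0 => //.
  by apply: addr_ge0 => //; apply: divr_ge0 => //; apply: ltW.
have hsq : w ^+ 2 - 2 * K3 * e <= ga ^+ 2.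
  case: (lerP w e) => h.
    have : w ^+ 2 <= K3 * e by nra.
    have := sqr_ge0 ga; nra.
  have : (w - e) ^+ 2 <= ga ^+ 2 by rewrite lerXn2r // ?nnegrE; lra.
  nra.
rewrite ew.
have : s * (al - be) ^+ 2 <= s * (K1 ^+ 2 * D2) by apply: ler_wpM2l.
rewrite /e in hsq.
have -> : (K1 ^+ 2 + 2 * K3 * C1) * s * D2 = s * (K1 ^+ 2 * D2) + 2 * K3 * (C1 * s * D2) by ring.
lra.
Qed.

Lemma cont_bound (R : realType) (g : R -> R) (a : R) : {for a, continuous g} ->
  exists2 e : R, 0 < e & forall s, `|s - a| < e -> `|g s| <= `|g a| + 1.
Proof.
move=> ca.
have := @cvgr_dist_lt _ _ _ (nbhs a) _ g (g a) ca 1 ltr01.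
move=> h0; have [e e0 he] := (proj1 (nbhs_ballP _ _)) (h0 _).
exists e => // s hs.
have := he s; rewrite -ball_normE /ball_ /= distrC => /(_ hs) h.
have -> : g s = g a - (g a - g s) by ring.
apply: le_trans (ler_normB _ _) _; lra.
Qed.

Section Ar.
Variable R : realFieldType.

Lemma sq_lt (a b : R) : 0 <= a -> a < b -> a ^+ 2 < b ^+ 2.
Proof. move=> a0 ab; nra. Qed.

Lemma bound_arith (a0 K3 Ny mY : R) : 0 < a0 -> 0 < K3 -> 0 <= Ny ->
  (Ny <= 2 * a0 -> mY <= K3) -> (2 * a0 < Ny -> mY / Ny <= K3 / (2 * a0)) ->
  mY <= K3 * (1 + Ny / (2 * a0)).
Proof.
move=> a0p K3p Ny0 h1 h2.
have q0 : 0 <= K3 * (Ny / (2 * a0)) by rewrite mulr_ge0 ?divr_ge0 ?mulr_ge0 //; lra.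
case: (lerP Ny (2 * a0)) => h.
  have := h1 h; lra.
have Nyp : 0 < Ny by lra.
have := h2 h; rewrite ler_pdivrMr // => h'.
have -> : K3 * (1 + Ny / (2 * a0)) = K3 + K3 / (2 * a0) * Ny by rewrite mulrDr mulr1 [Ny / _]mulrC mulrA.
have : 0 <= K3 by lra.
lra.
Qed.

Lemma near_arith (a0 K3 r dd Ny mY dl : R) : 0 < a0 -> 0 < K3 -> 0 <= r ->
  r * K3 <= a0 -> 3 * (r * K3) <= dl -> 0 <= dd -> 0 <= Ny -> Ny <= a0 + dd ->
  mY <= K3 * (1 + Ny / (2 * a0)) -> dd < r * mY -> dd < dl.
Proof.
move=> a0p K3p r0 rK3 rK3' dd0 Ny0 hNy bm hy.
have h1 : dd < r * K3 * (1 + Ny / (2 * a0)).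
  apply: (lt_le_trans hy); rewrite -mulrA; exact: ler_wpM2l.
have e : r * K3 * (1 + Ny / (2 * a0)) = r * K3 + (r * K3 / a0) * (Ny / 2).
  by field; rewrite gt_eqF.
rewrite e in h1.
have q1 : r * K3 / a0 <= 1 by rewrite ler_pdivrMr // mul1r.
have q2 : 0 <= r * K3 / a0 by rewrite divr_ge0 ?mulr_ge0 //; lra.
have q3 : (r * K3 / a0) * (Ny / 2) <= (r * K3 / a0) * ((a0 + dd) / 2).
  by apply: ler_wpM2l => //; lra.
have q4 : (r * K3 / a0) * ((a0 + dd) / 2) = r * K3 / 2 + (r * K3 / a0) * dd / 2.
  by field; rewrite gt_eqF.
have q5 : (r * K3 / a0) * dd <= dd by apply: ler_piMl.
lra.
Qed.

Lemma final_arith (Ea Eb Ev al be ga r t D2 C : R) :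
  Ea < r ^+ 2 * al ^+ 2 -> Eb < r ^+ 2 * be ^+ 2 -> 0 <= t <= 1 -> 0 <= D2 ->
  0 <= C -> r ^+ 2 * C <= 1 ->
  (1 - t) * al ^+ 2 + t * be ^+ 2 - C * (t * (1 - t)) * D2 <= ga ^+ 2 ->
  Ev = (1 - t) * Ea + t * Eb - t * (1 - t) * D2 ->
  Ev < r ^+ 2 * ga ^+ 2.
Proof.
move=> ha hb /andP[t0 t1] D0 C0 rC key ->.
set s := t * (1 - t).
have s0 : 0 <= s by rewrite /s; apply: mulr_ge0; lra.
have sD : 0 <= s * D2 by apply: mulr_ge0.
have h1 : (1 - t) * Ea + t * Eb < (1 - t) * (r ^+ 2 * al ^+ 2) + t * (r ^+ 2 * be ^+ 2).
  case: (ltrP 0 t) => tp.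
    have : t * Eb < t * (r ^+ 2 * be ^+ 2) by rewrite ltr_pM2l.
    have : (1 - t) * Ea <= (1 - t) * (r ^+ 2 * al ^+ 2) by apply: ler_wpM2l; lra.
    lra.
  have -> : t = 0 by lra.
  rewrite subr0 !mul1r !mul0r !addr0; lra.
have r20 : 0 <= r ^+ 2 by apply: sqr_ge0.
have h2 : r ^+ 2 * ((1 - t) * al ^+ 2 + t * be ^+ 2 - C * s * D2) <= r ^+ 2 * ga ^+ 2.
  by apply: ler_wpM2l.
have h3 : r ^+ 2 * (C * s * D2) <= s * D2.
  have -> : r ^+ 2 * (C * s * D2) = (r ^+ 2 * C) * (s * D2) by ring.
  by apply: ler_piMl.
have e : r ^+ 2 * ((1 - t) * al ^+ 2 + t * be ^+ 2 - C * s * D2) =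
   (1 - t) * (r ^+ 2 * al ^+ 2) + t * (r ^+ 2 * be ^+ 2) - r ^+ 2 * (C * s * D2) by ring.
rewrite e in h2.
lra.
Qed.
Lemma conv_lt (Ea Eb c t sD : R) : Ea < c -> Eb < c -> 0 <= t <= 1 -> 0 <= sD ->
  (1 - t) * Ea + t * Eb - sD < c.
Proof.
move=> ha hb /andP[t0 t1] sD0.
have -> : (1 - t) * Ea + t * Eb = Ea + t * (Eb - Ea) by ring.
case: (lerP Ea Eb) => h.
  have : t * (Eb - Ea) <= Eb - Ea by apply: ler_piMl => //; lra.
  lra.
have : t * (Eb - Ea) <= 0 by rewrite mulr_ge0_le0 //; lra.
lra.
Qed.

Lemma sq_le_abs (u w : R) : `|u| <= w -> u ^+ 2 <= w ^+ 2.
Proof.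
move=> h; rewrite -real_normK ?num_real //.
have := normr_ge0 u; nra.
Qed.
End Ar.

Unset Implicit Arguments.

Theorem lemma5p5 (R : realType) (n : nat) (M : R -> R -> R) :
  (forall s t, 0 <= s -> 0 <= t -> 0 <= M s t) ->
  (forall s t, 0 <= s -> 0 <= t -> M s t = M t s) ->
  moderately_increasing2 M ->
  is_metric (@rhoM R M n) ->
  (forall s, 0 <= s -> C2_on_pos (M s)) ->
  locally_convex_metric (@rhoM R M n).
Proof.
move=> Mnn Msym Mmi [rho0 [rhoeq [rhosym rhotri]]] HC2 x.
have rhoxx : rhoM M x x = 0 by apply/rhoeq.
have Mpos : forall y, y != x -> 0 < M (enorm x) (enorm y).
  move=> y yx; rewrite lt_neqAle Mnn ?enorm_ge0 // andbT eq_sym.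
  apply/eqP => h; move: yx; rewrite (proj1 (rhoeq x y)) ?eqxx //.
  by rewrite /rhoM h invr0 mulr0.
have rho_lt : forall y r, y != x -> enorm (x - y) < r * M (enorm x) (enorm y) ->
    rhoM M x y < r.
  by move=> y r yx h; rewrite /rhoM ltr_pdivrMr // Mpos.
have lt_rho : forall y r, y != x -> rhoM M x y < r ->
    enorm (x - y) < r * M (enorm x) (enorm y).
  by move=> y r yx; rewrite /rhoM ltr_pdivrMr // Mpos.
have comb_sub : forall a b (t : R), x - ((1 - t) *: a + t *: b) =
    (1 - t) *: (x - a) + t *: (x - b).
  by move=> a b t; apply/matrixP => i j; rewrite !mxE; ring.
have [x0|xn0] := eqVneq x 0.
  exists 1 => // r r0 _ a b ha hb t t0 t1 /=.
  set v := (1 - t) *: a + t *: b.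
  have [->|vx] := eqVneq v x; first by rewrite rhoxx.
  have vn0 : v != 0 by rewrite -x0.
  have Vp := enorm_gt0 vn0.
  have [mdec_inc mdec] := (Mmi 0 (lexx 0)).1.
  have claim : forall c, rhoM M x c < r -> enorm v <= enorm c -> rhoM M x v < r.
    move=> c hc hvc.
    have cx : c != x.
      apply/eqP => ec; move: hvc; rewrite ec x0 enorm0; lra.
    apply: (rho_lt v r vx).
    have := lt_rho c r cx hc; rewrite x0 enorm0 sub0r enormN => hc'.
    rewrite sub0r enormN.
    have Cp : 0 < enorm c by lra.
    have hr := mdec _ _ Vp hvc.
    have hMV : 0 < M 0 (enorm v) by have := Mpos v vx; rewrite x0 enorm0.
    have hMC : 0 < M 0 (enorm c) by have := Mpos c cx; rewrite x0 enorm0.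
    move: hr; rewrite ler_pdivrMr // mulrAC ler_pdivlMr // => hr.
    have : enorm v * enorm c < r * M 0 (enorm v) * enorm c.
      have : enorm v * enorm c < enorm v * (r * M 0 (enorm c)) by rewrite ltr_pM2l.
      move=> h1; apply: (lt_le_trans h1).
      rewrite mulrCA -mulrA ler_pM2l //.
      by rewrite mulrC.
    by rewrite ltr_pM2r.
  have eV := nsq_comb a b t.
  rewrite -/v -!enorm_sq in eV.
  have := enorm_ge0 a; have := enorm_ge0 b; have := enorm_ge0 (a - b).
  have s0 : 0 <= t * (1 - t) * enorm (a - b) ^+ 2.
    by rewrite mulr_ge0 ?sqr_ge0 // mulr_ge0 //; lra.
  move=> n1 n2 n3.
  case: (lerP (enorm a) (enorm b)) => hab.
    apply: (claim b hb).
    have : enorm v ^+ 2 <= enorm b ^+ 2.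
      rewrite eV.
      have : (1 - t) * enorm a ^+ 2 <= (1 - t) * enorm b ^+ 2.
        by apply: ler_wpM2l; [lra | rewrite lerXn2r // ?nnegrE].
      lra.
    move=> h; have := enorm_ge0 v; nra.
  apply: (claim a ha).
  have : enorm v ^+ 2 <= enorm a ^+ 2.
    rewrite eV.
    have : t * enorm b ^+ 2 <= t * enorm a ^+ 2.
      by apply: ler_wpM2l => //; rewrite lerXn2r // ?nnegrE // ltW.
    lra.
  move=> h; have := enorm_ge0 v; nra.
set a0 := enorm x.
have a0p : 0 < a0 := enorm_gt0 xn0.
set m := M a0.
have nxx : - x != x.
  apply/eqP => h; move/eqP: xn0; apply; apply/matrixP => i j.
  have := congr1 (fun u : 'rV[R]_n => u i j) h; rewrite /= !mxE => h'.
  have : x i j = 0 by lra.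
  by move=> ->.
have ma0 : 0 < m a0 by have := Mpos _ nxx; rewrite enormN.
have [d1 [d2 d3]] := HC2 a0 (ltW a0p).
have [e1 e1p hb2] := cont_bound (d3 a0 a0p).
set K2 := `|((m^`()%classic)^`()) a0| + 1.
have K2p : 0 <= K2 by rewrite /K2; have := normr_ge0 (((m^`()%classic)^`()) a0); lra.
set dl := Num.min e1 (a0 / 2).
have dle1 : dl <= e1 by rewrite /dl ge_min lexx.
have dla0 : dl <= a0 / 2 by rewrite /dl ge_min lexx orbT.
have dlp : 0 < dl by rewrite /dl lt_min e1p /=; lra.
set lo := a0 - dl; set hi := a0 + dl.
have Ipos : forall s, lo < s < hi -> 0 < s.
  by move=> s /andP[h1 h2]; rewrite /lo in h1; lra.
have Ie1 : forall s, lo < s < hi -> `|s - a0| < e1.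
  move=> s /andP[h1 h2]; rewrite ltr_norml; apply/andP; rewrite /lo /hi in h1 h2; split; lra.
have dm : forall s, lo < s < hi -> derivable m s 1 by move=> s /Ipos; apply: d1.
have dm' : forall s, lo < s < hi -> derivable (m^`()%classic) s 1 by move=> s /Ipos; apply: d2.
have bm'' : forall s, lo < s < hi -> `|((m^`()%classic)^`()) s| <= K2 by move=> s /Ie1; apply: hb2.
have lip' := lipf dm' bm''.
set K1 := `|(m^`()%classic) a0| + K2 * dl.
have K1p : 0 <= K1 by rewrite /K1 addr_ge0 // mulr_ge0 // ltW.
have a0I : lo < a0 < hi by apply/andP; rewrite /lo /hi; split; lra.
have bm' : forall s, lo < s < hi -> `|(m^`()%classic) s| <= K1.
  move=> s hs; have := lip' _ _ a0I hs.
  have : `|s - a0| <= dl.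
    by case/andP: hs => h1 h2; rewrite ler_norml; apply/andP; rewrite /lo /hi in h1 h2; split; lra.
  move=> h1 h2.
  have h3 : K2 * `|s - a0| <= K2 * dl by apply: ler_wpM2l.
  have -> : (m^`()%classic) s = (m^`()%classic) a0 + ((m^`()%classic) s - (m^`()%classic) a0) by ring.
  apply: le_trans (ler_normD _ _) _; rewrite /K1; lra.
have lipm := lipf dm bm'.
have sc : forall A B t, lo < A < hi -> lo < B < hi -> 0 <= t <= 1 ->
     (1 - t) * m A + t * m B - K2 * (t * (1 - t)) * (B - A) ^+ 2
       <= m ((1 - t) * A + t * B).
  by move=> A B t hA hB ht; apply: semiconc dm lip' hA hB ht.
have [[mono mrat] _] := Mmi a0 (ltW a0p).
set K3 := m (2 * a0).
have mb : forall s, lo < s < hi -> 0 <= m s <= K3.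
  move=> s hs; have s0 := Ipos s hs; apply/andP; split.
    by apply: Mnn; [apply: ltW | apply: ltW].
  by apply: mono; [apply: ltW | case/andP: hs => _ h; rewrite /hi in h; lra].
have K3p : 0 < K3 by apply: lt_le_trans ma0 _; apply: mono; lra.
set C := K1 ^+ 2 + 2 * K3 * (K1 / a0 + K2).
have Cp : 0 <= C.
  rewrite /C addr_ge0 ?sqr_ge0 // mulr_ge0 // ?mulr_ge0 // ?addr_ge0 // ?divr_ge0 //; lra.
have key := key1D a0p dlp dla0 K1p K2p mono mb lipm sc.
exists (Num.min (Num.min (a0 / K3) (dl / (3 * K3))) (1 / (C + 1))).
  by rewrite !lt_min !divr_gt0 // ?mulr_gt0 //; lra.
move=> r rp; rewrite !lt_min => /andP[/andP[r1 r2] r3] a b ha hb t t0 t1 /=.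
have rK3 : r * K3 <= a0 by move: r1; rewrite ltr_pdivlMr // => /ltW.
have rK3' : 3 * (r * K3) <= dl.
  by move: r2; rewrite ltr_pdivlMr ?mulr_gt0 // => /ltW h; lra.
have rC : r ^+ 2 * C <= 1.
  move: r3; rewrite ltr_pdivlMr; last lra.
  rewrite mulrDr mulr1 => h.
  have rCp : 0 <= r * C by rewrite mulr_ge0 // ltW.
  have rle1 : r <= 1 by lra.
  have : r * (r * C) <= 1 * (r * C) by apply: ler_wpM2r.
  rewrite mul1r expr2 -mulrA; lra.
have inb : forall y, rhoM M x y < r -> enorm (x - y) < r * m (enorm y).
  move=> y hy; have [eyx|yx] := eqVneq y x.
    by rewrite eyx subrr enorm0 mulr_gt0.
  exact: lt_rho.
have near : forall y, enorm (x - y) < r * m (enorm y) -> enorm (x - y) < dl.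
  move=> y hy.
  have hNy : enorm y <= a0 + enorm (x - y).
    by have := enorm_triangle x (y - x); rewrite addrC subrK -opprB enormN.
  have Ny0 := enorm_ge0 y.
  have bm : m (enorm y) <= K3 * (1 + enorm y / (2 * a0)).
    apply: bound_arith => // h.
      by apply: mono => //; apply: enorm_ge0.
    by have := mrat _ _ (_ : 0 < 2 * a0) (ltW h); rewrite -/K3; apply; rewrite mulr_gt0.
  exact: (near_arith a0p K3p (ltW rp) rK3 rK3' (enorm_ge0 _) Ny0 hNy bm hy).
have pt : forall y, rhoM M x y < r -> [/\ lo < enorm y < hi,
    nsq (x - y) < r ^+ 2 * m (enorm y) ^+ 2 & nsq (x - y) < dl ^+ 2].
  move=> y hy; have hy' := inb y hy; have dy := near y hy'.
  split.
  - have := enorm_rev y x; rewrite -[y - x]opprB enormN -/a0 ler_norml => /andP[h1 h2].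
    by apply/andP; rewrite /lo /hi; split; lra.
  - by rewrite -enorm_sq -exprMn; apply: sq_lt (enorm_ge0 _) hy'.
  - by rewrite -enorm_sq; apply: sq_lt (enorm_ge0 _) dy.
have [IA Ea Ea'] := pt a ha.
have [IB Eb Eb'] := pt b hb.
set v := (1 - t) *: a + t *: b.
have ht : 0 <= t <= 1 by rewrite t0 t1.
have eab : (x - a) - (x - b) = - (a - b) by apply/matrixP => i j; rewrite !mxE; ring.
have Ev : nsq (x - v) = (1 - t) * nsq (x - a) + t * nsq (x - b) - t * (1 - t) * nsq (a - b).
  by rewrite /v comb_sub nsq_comb eab nsqN.
have D0 : 0 <= nsq (a - b) := nsq_ge0 _.
have sD0 : 0 <= t * (1 - t) * nsq (a - b).
  by rewrite mulr_ge0 // mulr_ge0 // subr_ge0.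
have dv : enorm (x - v) < dl.
  apply: enorm_lt_sq; first exact: ltW.
  by rewrite Ev; apply: conv_lt.
have IV : lo < enorm v < hi.
  have := enorm_rev v x; rewrite -[v - x]opprB enormN -/a0 ler_norml => /andP[h1 h2].
  by apply/andP; rewrite /lo /hi; split; lra.
have hD : (enorm a - enorm b) ^+ 2 <= nsq (a - b).
  by rewrite -enorm_sq; apply: sq_le_abs; apply: enorm_rev.
have eVV : enorm v ^+ 2 = (1 - t) * enorm a ^+ 2 + t * enorm b ^+ 2
    - t * (1 - t) * nsq (a - b).
  by rewrite !enorm_sq /v nsq_comb.
have hk := key _ _ _ _ _ IA IB IV ht hD eVV.
have hfin := final_arith Ea Eb ht D0 Cp rC hk Ev.
have hlt : enorm (x - v) < r * m (enorm v).
  apply: enorm_lt_sq; first by rewrite mulr_ge0 ?(ltW rp) //; case/andP: (mb _ IV).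
  by rewrite exprMn.
have [evx|vx] := eqVneq v x; first by rewrite evx rhoxx.
exact: rho_lt.
Qed.
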